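(* Let $\mathcal{H}$ be finite and let $D$ consist of $n$ i.i.d. samples from $\mathcal{D}$. With probability $1-\delta$, for all $f\in\Delta(\mathcal{H})$ and all $\lambda\in\Lambda_C$, $|\mathcal{L}_{\mathcal{D}}(f,\lambda)-\mathcal{L}_D(f,\lambda)|\le\sqrt{\frac{\ln(4|\mathcal{H}|/\delta)}{2n}}+C\sqrt{\frac{8\ln(4|\mathcal{H}|Ndm/\delta)}{n}}.$
   Context: Data $(x,y)\in\mathcal{X}\times[-1,1]^d$ drawn from $\mathcal{D}$; $\mathcal{H}$ a class of functions $h:\mathcal{X}\to[-1,1]^d$. Receivers $i\in[N]$ have finite action sets $\mathcal{A}_i$, $|\mathcal{A}_i|=m$, utilities $v_i:\mathcal{A}_i\times[-1,1]^d\to[0,1]$; $b_i(z,a)=1$ if $a=\arg\max_{a'}v_i(a',z)$ (fixed tie-breaking), else $0$; $b(z,\mathbf a)=\prod_ib_i(z,a_i)$, $\mathcal{A}=\prod_i\mathcal{A}_i$; sender utility $u:\mathcal{A}\times[-1,1]^d\to[0,1]$; $\gamma\ge0$. $I=\{(s,i,j,a):s\in\{\pm1\},i\in[N],j\in[d],a\in\mathcal{A}_i\}$, $\Lambda_C=\{\lambda\in\mathbb{R}_{\ge0}^I:\|\lambda\|_1\le C\}$. For a distribution $P$ (either $\mathcal{D}$ or the empirical distribution of $D$), $\mathcal{L}_P(f,\lambda)=-\mathbb{E}_{h\sim f}\mathbb{E}_P[\sum_{\mathbf a}u(\mathbf a,y)b(h(x),\mathbf a)]+\sum_{(s,i,j,a)\in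 I}\lambda_{s,i,j,a}\,s\big(\mathbb{E}_{h\sim f}\mathbb{E}_P[(h(x)_j-y_j)b_i(h(x),a)]-\gamma\big)$. *)

(* Defs.v *)
From HB Require Import structures.
From mathcomp Require Import all_boot all_order all_algebra.
From mathcomp Require Import all_classical all_reals all_analysis.
Set Implicit Arguments. Unset Strict Implicit. Unset Printing Implicit Defensive.
Import Order.TTheory GRing.Theory Num.Theory.
Local Open Scope ring_scope.

Definition sgn (R : realType) (s : bool) : R := if s then 1 else -1.

Definition bi (R : realType) (N d m : nat) (br : 'I_N -> ('I_d -> R) -> 'I_m)
  (i : 'I_N) (z : 'I_d -> R) (a : 'I_m) : R := (br i z == a)%:R.

Definition bjoint (R : realType) (N d m : nat) (br : 'I_N -> ('I_d -> R) -> 'I_m)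
  (z : 'I_d -> R) (a : {ffun 'I_N -> 'I_m}) : R := \prod_(i < N) bi br i z (a i).

Definition sender_val (R : realType) (N d m : nat) (br : 'I_N -> ('I_d -> R) -> 'I_m)
  (u : {ffun 'I_N -> 'I_m} -> ('I_d -> R) -> R) (z y : 'I_d -> R) : R :=
  \sum_(a : {ffun 'I_N -> 'I_m}) u a y * bjoint br z a.

(* Delta(H): probability weights on the (finite, indexed) hypothesis class *)
Definition in_simplex (R : realType) (I : finType) (w : I -> R) : Prop :=
  (forall k, 0 <= w k) /\ \sum_(k : I) w k = 1.

(* Lambda_C, index set I = {+-1} x [N] x [d] x A_i *)
Definition in_LambdaC (R : realType) (N d m : nat) (C : R)
  (lam : bool * 'I_N * 'I_d * 'I_m -> R) : Prop :=
  (forall q, 0 <= lam q) /\ \sum_(q : bool * 'I_N * 'I_d * 'I_m) lam q <= C.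

(* The Lagrangian L_P(f, lambda), where E is the expectation operator of P
   (E_P[g] for g a function of the data point t = (x,y)). *)
Definition lagrangian (R : realType) (T X : Type) (N d m : nat) (I : finType)
  (hyp : I -> X -> 'I_d -> R) (xof : T -> X) (yof : T -> 'I_d -> R)
  (br : 'I_N -> ('I_d -> R) -> 'I_m) (u : {ffun 'I_N -> 'I_m} -> ('I_d -> R) -> R)
  (gamma : R) (E : (T -> R) -> R) (w : I -> R)
  (lam : bool * 'I_N * 'I_d * 'I_m -> R) : R :=
  - (\sum_(k : I) w k * E (fun t => sender_val br u (hyp k (xof t)) (yof t)))
  + \sum_(q : bool * 'I_N * 'I_d * 'I_m)
      let: (s, i, j, a) := q in
      lam q * (sgn R s *
        (\sum_(k : I) w k *
            E (fun t => (hyp k (xof t) j - yof t j) * bi br i (hyp k (xof t)) a)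
         - gamma)).

Definition popE (R : realType) (dT : measure_display) (T : measurableType dT)
  (Dist : probability T R) (g : T -> R) : R := Rintegral Dist setT g.

Definition empE (R : realType) (T : Type) (n : nat) (z : 'I_n -> T) (g : T -> R) : R :=
  n%:R^-1 * \sum_(s < n) g (z s).

Definition iid_samples (R : realType) (dO : measure_display) (Omega : measurableType dO)
  (P : probability Omega R) (dT : measure_display) (T : measurableType dT)
  (Dist : probability T R) (n : nat) (Z : 'I_n -> Omega -> T) : Prop :=
  (forall s, measurable_fun setT (Z s)) /\
  forall B : 'I_n -> set T, (forall s, measurable (B s)) ->
    P [set om : Omega | forall s : 'I_n, B s (Z s om)]%classic = (\prod_(s < n) fine (Dist (B s)))%:E.

(* Main.v *)
Require Import Defs.
From HB Require Import structures.
From mathcomp Require Import all_boot all_order all_algebra.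
From mathcomp Require Import all_classical all_reals all_analysis.
From mathcomp Require Import ring lra measurable_realfun.
Import Order.TTheory GRing.Theory Num.Theory.
Local Open Scope ring_scope.

Module Helpers.
Set Implicit Arguments. Unset Strict Implicit. Unset Printing Implicit Defensive.
Import numFieldNormedType.Exports.
Local Open Scope classical_set_scope.
Local Open Scope ring_scope.
Section CRs.
Variable R : realType.

Lemma CR_Dpos (p y : R) : 0 <= p <= 1 -> 0 < 1 - p + p * expR y.
Proof.
case/andP=> p0 p1; have [->|pn0] := eqVneq p 0.
  by rewrite subr0 mul0r addr0.
have : 0 < p * expR y by rewrite mulr_gt0 ?expR_gt0 // lt_def pn0 p0.
lra.
Qed.

Lemma CR_dD (p x : R) :
  is_derive x 1 (fun y : R => 1 - p + p * expR y) (p * expR x).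
Proof.
have hE : is_derive x 1 (fun y : R => p * expR y) (p * expR x).
  have := is_deriveZ p (is_derive_expR x).
  by rewrite /GRing.scale /=.
have := is_deriveD (is_derive_cst (1 - p) x 1) hE.
by rewrite add0r.
Qed.

Lemma CR_dG1 (p x : R) : 0 <= p <= 1 ->
  is_derive x 1 (fun y => p + 1/4 * y - 1 + (1 - p) * (1 - p + p * expR y)^-1)
   (1/4 - (1-p) * (p * expR x) / (1 - p + p * expR x)^+2).
Proof.
move=> hp.
have Dpos := CR_Dpos x hp.
have hV := @is_deriveV _ (fun y => 1 - p + p * expR y) x _ _ (lt0r_neq0 Dpos) (CR_dD p x).
have hV2 := is_deriveZ (1 - p) hV.
have hL : is_derive x 1 (fun y : R => p + 1/4 * y - 1) (1/4).
  have := is_deriveB (is_deriveD (is_derive_cst p x 1) (is_deriveZ (1/4) (is_derive_id x (1:R)))) (is_derive_cst (1:R) x 1).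
  move=> H; apply: is_derive_eq H _.
  by rewrite /GRing.scale /= add0r subr0 mulr1.
have := is_deriveD hL hV2.
move=> H; apply: is_derive_eq H _.
rewrite /GRing.scale /=.
have D0 : (1 - p + p * expR x) != 0 by exact: lt0r_neq0.
field.
all: try done.
Qed.

Lemma CR_cont (f : R -> R) (df : R -> R) :
  (forall x : R, is_derive x (1:R) f (df x)) -> forall a b : R, {within `[a, b], continuous f}.
Proof.
move=> H a b; apply/continuous_subspaceT => r.
apply/differentiable_continuous/derivable1_diffP.
by case: (H r).
Qed.

Lemma CR_G1 (p u : R) : 0 <= p <= 1 -> 0 <= u ->
  0 <= p + 1/4 * u - 1 + (1 - p) * (1 - p + p * expR u)^-1.
Proof.
move=> hp u0.
have [c _ E] := MVT_segment u0 (fun x _ => CR_dG1 x hp) (CR_cont (fun x => CR_dG1 x hp) (a:=0) (b:=u)).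
move: E; rewrite expR0 mulr1 subr0.
have -> : p + 1 / 4 * 0 - 1 + (1 - p) / (1 - p + p) = 0.
  by rewrite mulr0 addr0 subrK divr1; ring.
rewrite subr0 => ->.
apply: mulr_ge0 => //.
have Dpos := CR_Dpos c hp.
have -> : 1 / 4 - (1 - p) * (p * expR c) / (1 - p + p * expR c) ^+ 2
   = (1 - p - p * expR c)^+2 / (4 * (1 - p + p * expR c) ^+ 2).
  by field; rewrite lt0r_neq0.
by apply: divr_ge0; [exact: sqr_ge0| apply: mulr_ge0 => //; exact: sqr_ge0].
Qed.

Lemma CR (p u : R) : 0 <= p <= 1 -> 0 <= u ->
  1 - p + p * expR u <= expR (p * u + u ^+ 2 / 8).
Proof.
move=> hp u0.
pose G y := p * y + 1/8 * y ^+ 2 - ln (1 - p + p * expR y).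
pose G' y := p + 1/4 * y - 1 + (1 - p) * (1 - p + p * expR y)^-1.
have dG (x : R) : is_derive x (1:R) G (G' x).
  have Dpos := CR_Dpos x hp.
  have hl := is_derive1_comp (f:=@ln R) (g:=fun y => 1 - p + p * expR y) (is_derive1_ln Dpos) (CR_dD p x).
  have hq : is_derive x 1 (fun y : R => p * y + 1/8 * y ^+ 2) (p + x / 4).
    have := is_deriveD (is_deriveZ p (is_derive_id x (1:R)))
               (is_deriveZ (1/8) (is_deriveX 2 (is_derive_id x (1:R)))).
    move=> H; apply: is_derive_eq H _.
    by rewrite /GRing.scale /= expr1; field.
  have := is_deriveB hq hl.
  move=> H; apply: is_derive_eq H _.
  rewrite /G'.
  by field; rewrite lt0r_neq0.
have [c /andP[c0 _] E] := MVT_segment u0 (fun x _ => dG x) (CR_cont dG (a:=0) (b:=u)).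
have : 0 <= G u.
  have -> : G u = G u - G 0.
    by rewrite /G mulr0 expr0n /= mulr0 addr0 expR0 mulr1 subrK ln1 subr0 subr0.
  rewrite E; apply: mulr_ge0; last by rewrite subr0.
  exact: CR_G1.
rewrite /G subr_ge0 => H.
rewrite -[X in X <= _]lnK; last by rewrite posrE CR_Dpos.
rewrite ler_expR; apply: (le_trans H); rewrite le_eqVlt; apply/orP; left; apply/eqP.
by field.
Qed.
End CRs.
Section HLs.
Variable R : realType.
Lemma exp_conv (w u : R) : 0 <= w -> w <= 1 -> expR (w * u) <= 1 - w + w * expR u.
Proof.
move=> w0 w1.
have := convex_expR (Itv01 w0 w1) u 0.
rewrite !convRE /= mulr0 addr0 expR0 mulr1.
by rewrite addrC.
Qed.

Lemma HL (V : finType) (pi val : V -> R) (a b l : R) :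
  (forall v, 0 <= pi v) -> \sum_v pi v = 1 -> (forall v, a <= val v <= b) ->
  a < b -> 0 <= l ->
  \sum_v pi v * expR (l * val v)
    <= expR (l * (\sum_v pi v * val v) + l ^+ 2 * (b - a) ^+ 2 / 8).
Proof.
move=> pi0 pi1 hv ab l0.
set c := b - a.
have c0 : 0 < c by rewrite subr_gt0.
pose w v := (val v - a) / c.
have w0 v : 0 <= w v.
  by rewrite /w divr_ge0 ?(ltW c0) // subr_ge0; case/andP: (hv v).
have w1 v : w v <= 1.
  rewrite /w ler_pdivrMr // mul1r /c lerD2r; by case/andP: (hv v).
set K := expR (l * a).
set E := expR (l * c).
have pt v : expR (l * val v) <= K * (1 - w v + w v * E).
  have -> : l * val v = l * a + w v * (l * c).
    by rewrite /w; field; rewrite lt0r_neq0.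
  rewrite expRD ler_pM2l ?expR_gt0 //.
  exact: exp_conv.
set p := \sum_v pi v * w v.
have p0 : 0 <= p by apply: sumr_ge0 => v _; apply: mulr_ge0.
have p1 : p <= 1.
  rewrite -pi1; apply: ler_sum => v _.
  by rewrite -[X in _ <= X]mulr1 ler_wpM2l.
have S1 : \sum_v pi v * expR (l * val v) <= K * (1 - p + p * E).
  apply: (@le_trans _ _ (\sum_v (K * pi v + (K * (E - 1)) * (pi v * w v)))).
    apply: ler_sum => v _.
    have -> : K * pi v + K * (E - 1) * (pi v * w v) = pi v * (K * (1 - w v + w v * E)) by ring.
    by apply: ler_wpM2l.
  rewrite big_split /= -!mulr_sumr pi1 -/p.
  by rewrite le_eqVlt; apply/orP; left; apply/eqP; ring.
apply: (le_trans S1).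
have := CR (p := p) (u := l * c).
rewrite p0 p1 mulr_ge0 // ?(ltW c0) // => /(_ isT isT) H.
rewrite /K -[X in X <= _]/(expR (l * a) * _).
apply: (le_trans (ler_wpM2l (expR_ge0 _) H)).
rewrite -expRD le_eqVlt; apply/orP; left; apply/eqP; congr expR.
have pc : p * c = \sum_v pi v * val v - a.
  rewrite /p mulr_suml.
  have -> : \sum_v pi v * w v * c = \sum_v (pi v * val v - a * pi v).
    by apply: eq_bigr => v _; rewrite /w; field; rewrite lt0r_neq0.
  by rewrite sumrB -mulr_sumr pi1 mulr1.
have -> : l * a + (p * (l * c) + (l * c) ^+ 2 / 8) = l * a + l * (p * c) + (l * c) ^+ 2 / 8 by ring.
rewrite pc; ring.
Qed.
End HLs.

Section LIMs.
Variable R : realType.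
Lemma LIM (x e al c : R) : 0 < e -> 0 < al -> 0 < c -> x <= 1 ->
 (forall K : nat, (0 < K)%N -> c / K%:R < e -> x <= expR (- (al * (e - c / K%:R) ^+ 2))) ->
 x <= expR (- (al * e ^+ 2)).
Proof.
move=> e0 al0 c0 x1 H.
rewrite leNgt; apply/negP => hx.
have x0 : 0 < x := lt_trans (expR_gt0 _) hx.
set r := - ln x / al.
have r0 : 0 <= r by rewrite /r divr_ge0 ?(ltW al0) // oppr_ge0 ln_le0.
have lnx : - (al * e ^+ 2) < ln x.
  by rewrite -ltr_expR lnK // posrE.
have re : r < e ^+ 2.
  by rewrite /r ltr_pdivrMr // mulrC; lra.
set h := (e ^+ 2 - r) / (4 * e).
have h0 : 0 < h by rewrite /h divr_gt0 ?mulr_gt0 // subr_gt0.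
have h4 : h * (4 * e) = e ^+ 2 - r by rewrite /h divfK // mulf_neq0 // lt0r_neq0.
have he : h < e.
  have : h * (4 * e) < e * (4 * e) by nra.
  by rewrite ltr_pM2r // mulr_gt0.
pose K := (Num.truncn (c / h)).+1.
have K0 : (0 < K)%N by [].
have Kpos : 0 < K%:R :> R by rewrite ltr0n.
have cK : c / K%:R < h.
  rewrite ltr_pdivrMr // -ltr_pdivrMl //; rewrite mulrC.
  exact: truncnS_gt.
have y0 : 0 < c / K%:R by rewrite divr_gt0.
have := H K K0 (lt_trans cK he).
apply/negP; rewrite -ltNge.
rewrite -[X in _ < X]lnK ?posrE // ltr_expR.
set y := c / K%:R in cK y0 *.
have hr : r < (e - y) ^+ 2.
  have : 0 < e * (h - y) by rewrite mulr_gt0 // subr_gt0.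
  nra.
have : - ln x = al * r by rewrite /r mulrC divfK // lt0r_neq0.
nra.
Qed.
End LIMs.
Section DLTrs.
Variable R : realType.
Lemma DLTr (V : finType) (pi val : V -> R) (a b e : R) (n : nat) :
  (forall v, 0 <= pi v) -> \sum_v pi v = 1 -> (forall v, a <= val v <= b) ->
  a < b -> 0 < e -> (0 < n)%N ->
  \sum_(f : {ffun 'I_n -> V} | n%:R^-1 * \sum_(s < n) val (f s) + e < \sum_v pi v * val v)
      \prod_(s < n) pi (f s)
   <= expR (- (2 * n%:R / (b - a) ^+ 2 * e ^+ 2)).
Proof.
move=> pi0 pi1 hv ab e0 n0.
set mu := \sum_v pi v * val v.
set c := b - a.
have c0 : 0 < c by rewrite subr_gt0.
set l := 4 * e / c ^+ 2.
have l0 : 0 <= l by rewrite /l divr_ge0 // ?sqr_ge0 // mulr_ge0 // ltW.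
have nR : 0 < n%:R :> R by rewrite ltr0n.
set G := fun x : V => pi x * expR (- l * val x).
have S1 : \sum_(f : {ffun 'I_n -> V} | n%:R^-1 * \sum_(s < n) val (f s) + e < mu)
      \prod_(s < n) pi (f s)
   <= \sum_(f : {ffun 'I_n -> V}) expR (l * n%:R * (mu - e)) * \prod_(s < n) G (f s).
  rewrite big_mkcond /=; apply: ler_sum => f _.
  have -> : expR (l * n%:R * (mu - e)) * \prod_(s < n) G (f s)
     = \prod_(s < n) pi (f s) * expR (l * (n%:R * (mu - e) - \sum_(s < n) val (f s))).
    rewrite /G big_split /= mulrCA; congr (_ * _).
    have -> : l * (n%:R * (mu - e) - \sum_(s < n) val (f s)) = l * n%:R * (mu - e) + (- l) * \sum_(s < n) val (f s) by ring.
    rewrite expRD; congr (_ * _).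
    rewrite mulr_sumr expR_sum; apply: eq_bigr => s _ //.

  have P0 : 0 <= \prod_(s < n) pi (f s) by apply: prodr_ge0 => s _.
  case: ifP => hc.
    rewrite -[X in X <= _]mulr1 ler_wpM2l //.
    have : 0 <= l * (n%:R * (mu - e) - \sum_(s < n) val (f s)).
      apply: mulr_ge0 => //; rewrite subr_ge0.
      move: hc; rewrite -ltrBrDr => hc.
      by apply: ltW; move: hc; rewrite mulrC ltr_pdivrMr // mulrC.
    move=> H; apply: le_trans (expR_ge1Dx _); lra.
  by apply: mulr_ge0 => //; exact: expR_ge0.
apply: (le_trans S1).
rewrite -mulr_sumr -(bigA_distr_bigA (fun (s : 'I_n) (x : V) => G x)) /=.
rewrite prodr_const card_ord.
set M := \sum_x G x.
have M0 : 0 <= M by apply: sumr_ge0 => x _; rewrite /G mulr_ge0 // expR_ge0.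
have HM : M <= expR (l * (- mu) + l ^+ 2 * c ^+ 2 / 8).
  have hv' : forall v, - b <= - val v <= - a.
    by move=> v; rewrite !lerN2 andbC; exact: hv.
  have := @HL _ V pi (fun x => - val x) (- b) (- a) l pi0 pi1 hv'.
  rewrite ltrN2 => /(_ ab l0).
  have -> : - a - - b = c by rewrite /c opprK addrC.
  have -> : \sum_v pi v * - val v = - mu by rewrite /mu -sumrN; apply: eq_bigr => v _; rewrite mulrN.
  apply: le_trans.
  by rewrite /M /G le_eqVlt; apply/orP; left; apply/eqP; apply: eq_bigr => x _; rewrite mulNr mulrN.
have HMn : M ^+ n <= expR (l * (- mu) + l ^+ 2 * c ^+ 2 / 8) ^+ n.
  by apply: lerXn2r => //; rewrite nnegrE // expR_ge0.
apply: le_trans (ler_wpM2l (expR_ge0 _) HMn) _.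
rewrite -expRM_natl -expRD le_eqVlt; apply/orP; left; apply/eqP; congr expR.
rewrite /l; field.
by rewrite lt0r_neq0.
Qed.
End DLTrs.

Section Prob1.
Variables (R : realType) (dT : measure_display) (T : measurableType dT) (Dist : probability T R).
Lemma DistT : Dist setT = 1%E.
Proof. exact: probability_setT. Qed.

Lemma INT (f : T -> R) (M : R) : (forall t, `|f t| <= M) -> measurable_fun setT f ->
  Dist.-integrable setT (EFin \o f).
Proof.
move=> fM mf; apply: measurable_bounded_integrable => //.
  by apply: (le_lt_trans (probability_le1 Dist measurableT)); rewrite ltry.
exists M; split; first by rewrite num_real.
by move=> x Mx t _; apply: le_trans (fM t) (ltW Mx).
Qed.

Lemma SIMPs (I : Type) (s : seq I) (h : I -> R) (A : I -> set T) :
  (forall i, measurable (A i)) ->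
  Rintegral Dist setT (fun t => \sum_(i <- s) h i * \1_(A i) t)
    = \sum_(i <- s) h i * fine (Dist (A i)).
Proof.
move=> mA; elim: s => [|x s IH].
  under eq_Rintegral do rewrite big_nil.
  by rewrite Rintegral_cst // mul0r big_nil.
under eq_Rintegral do rewrite big_cons.
rewrite big_cons RintegralD //.
- rewrite IH RintegralZl //.
  + congr (_ * _ + _); rewrite /Rintegral integral_indic // setIT //.
  + apply: (@INT _ 1); last exact: measurable_indic.
    by move=> t; rewrite /indic; case: (_ \in _); rewrite ?normr1 ?normr0.
- apply: (@INT _ `|h x|); last by apply: measurable_funM => //; exact: measurable_indic.
  move=> t; rewrite normrM -[X in _ <= X]mulr1 ler_wpM2l //.
  by rewrite /indic; case: (_ \in _); rewrite ?normr1 ?normr0.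
- apply: (@INT _ (\sum_(i <- s) `|h i|)).
    move=> t; apply: le_trans (ler_norm_sum _ _ _) _.
    apply: ler_sum => i _; rewrite normrM -[X in _ <= X]mulr1 ler_wpM2l //.
    by rewrite /indic; case: (_ \in _); rewrite ?normr1 ?normr0.
  by apply: measurable_sum => i; apply: measurable_funM => //; exact: measurable_indic.
Qed.

Lemma sum_pi (V : finType) (iota : T -> V) :
  (forall v, measurable [set t | iota t = v]) ->
  \sum_v fine (Dist [set t | iota t = v]) = 1.
Proof.
move=> mA.
have := SIMPs (index_enum V) (fun _ => 1) mA.
have H1 t : \sum_(v <- index_enum V) 1 * \1_[set t | iota t = v] t = 1 :> R.
  rewrite (bigD1 (iota t)) //= big1 ?addr0.
    by rewrite mul1r /indic mem_set.
  move=> v hv; rewrite mul1r /indic memNset //=.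
  by move=> e; move: hv; rewrite e eqxx.
have -> : Rintegral Dist setT (fun t => \sum_(v <- index_enum V) 1 * \1_[set t | iota t = v] t)
   = Rintegral Dist setT (fun _ => 1).
  by apply: eq_Rintegral => t _; exact: H1.
move=> H.
have : Rintegral Dist setT (fun _ => 1) = 1 :> R.
  rewrite Rintegral_cst // mul1r.
  by rewrite -[RHS]/(fine 1%E); congr fine; exact: DistT.
rewrite H; under eq_bigr do rewrite mul1r; done.
Qed.
End Prob1.

Section Prob2.
Variables (R : realType) (dT : measure_display) (T : measurableType dT) (Dist : probability T R).
Variables (dO : measure_display) (Omega : measurableType dO) (P : probability Omega R).
Variables (n : nat) (Z : 'I_n -> Omega -> T).

Lemma sub_bigU (I : Type) (r : seq I) (Pr : pred I) (F : I -> set Omega) :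
  (forall i, measurable (F i)) ->
  (P (\big[setU/set0]_(i <- r | Pr i) F i) <= \sum_(i <- r | Pr i) P (F i))%E.
Proof.
move=> mF; elim: r => [|x r IH]; first by rewrite !big_nil measure0.
rewrite !big_cons; case: (Pr x) => //.
apply: le_trans (measureU2 _ _ _) _ => //.
  by apply: bigsetU_measurable => i _.
by apply: leeD.
Qed.

Lemma Af_meas (V : finType) (iota : T -> V) (f : 'I_n -> V) :
  (forall s, measurable_fun setT (Z s)) ->
  (forall v, measurable [set t | iota t = v]) ->
  measurable [set om | forall s, [set t | iota t = f s] (Z s om)].
Proof.
move=> mZ mA.
have -> : [set om | forall s, [set t | iota t = f s] (Z s om)]
   = \bigcap_(s in [set: 'I_n]) (Z s @^-1` [set t | iota t = f s]).
  apply/seteqP; split => om /= h s; first by move=> _; exact: h.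
  exact: h.
apply: fin_bigcap_measurable; first exact: finite_finset.
move=> s _; rewrite -[X in measurable X]setTI.
have := (mZ s) measurableT _ (mA (f s)).
move=> /= h; exact: h.
Qed.

Lemma DLT (V : finType) (iota : T -> V) (val : V -> R) (a b e : R) :
  (forall v, measurable [set t | iota t = v]) -> (forall v, a <= val v <= b) ->
  a < b -> 0 < e -> (0 < n)%N -> iid_samples P Dist Z ->
  measurable [set om | n%:R^-1 * \sum_(s < n) val (iota (Z s om)) + e
                  < \sum_v fine (Dist [set t | iota t = v]) * val v] /\
  (P [set om | (n%:R^-1 * \sum_(s < n) val (iota (Z s om)) + e
                  < \sum_v fine (Dist [set t | iota t = v]) * val v)%R]
     <= (expR (- (2 * n%:R / (b - a) ^+ 2 * e ^+ 2)))%:E)%E.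
Proof.
move=> mA hv ab e0 n0 [mZ iid].
set pi := fun v => fine (Dist [set t | iota t = v]).
set mu := \sum_v pi v * val v.
pose cond (f : {ffun 'I_n -> V}) := n%:R^-1 * \sum_(s < n) val (f s) + e < mu.
pose Af (f : {ffun 'I_n -> V}) := [set om | forall s, [set t | iota t = f s] (Z s om)].
have eqU : [set om | n%:R^-1 * \sum_(s < n) val (iota (Z s om)) + e < mu]
    = \big[setU/set0]_(f <- index_enum _ | cond f) Af f.
  rewrite -bigcup_seq_cond; apply/seteqP; split => om /=.
    move=> h; exists [ffun s => iota (Z s om)].
      rewrite /= mem_index_enum /cond /=.
      by under eq_bigr do rewrite ffunE.
    by move=> s; rewrite /= ffunE.
  move=> [f /andP[_ hc] hA]; move: hc; rewrite /cond.
  suff -> : \sum_(s < n) val (iota (Z s om)) = \sum_(s < n) val (f s) by [].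
  by apply: eq_bigr => s _; rewrite (hA s).
have mAf f : measurable (Af f) by exact: Af_meas.
rewrite eqU; split; first by apply: bigsetU_measurable => f _.
apply: le_trans (sub_bigU _ _ mAf) _.
have -> : \sum_(f <- index_enum _ | cond f) P (Af f)
    = (\sum_(f <- index_enum _ | cond f) \prod_(s < n) pi (f s))%:E.
  rewrite -sumEFin; apply: eq_bigr => f _.
  exact: (iid (fun s => [set t | iota t = f s]) (fun s => mA (f s))).
rewrite lee_fin.
apply: DLTr => //.
- by move=> v; rewrite /pi fine_ge0.
- exact: sum_pi.
Qed.
End Prob2.

Section Prob3.
Variables (R : realType) (dT : measure_display) (T : measurableType dT) (Dist : probability T R).
Variables (dO : measure_display) (Omega : measurableType dO) (P : probability Omega R).
Variables (n : nat) (Z : 'I_n -> Omega -> T).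

Lemma sum_indic (V : finType) (iota : T -> V) (h : V -> R) t :
  \sum_v h v * \1_[set t | iota t = v] t = h (iota t).
Proof.
rewrite (bigD1 (iota t)) //= big1 ?addr0.
  by rewrite /indic mem_set // mulr1.
move=> v hv; rewrite /indic memNset ?mulr0 //=.
by move=> e; move: hv; rewrite e eqxx.
Qed.

Lemma meas_lt (f : Omega -> R) (c : R) : measurable_fun setT f ->
  measurable [set om | f om < c].
Proof.
move=> mf.
have -> : [set om | f om < c] = setT `&` (f @^-1` `]-oo, c[) .
  by apply/seteqP; split => om /=; rewrite ?in_itv /= ?andbT; [move=> h; split | case].
exact: mf measurableT _ (measurable_itv _).
Qed.

Lemma meas_emp (g : T -> R) (e : R) : measurable_fun setT g ->
  (forall s, measurable_fun setT (Z s)) ->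
  measurable_fun setT (fun om => empE (fun s => Z s om) g + e).
Proof.
move=> mg mZ; rewrite /empE.
apply: measurable_funD; last exact: measurable_cst.
apply: measurable_funM; first exact: measurable_cst.
apply: measurable_sum => s.
exact: measurableT_comp mg (mZ s).
Qed.

Lemma bnd_norm (x a b : R) : a <= x <= b -> `|x| <= `|a| + `|b|.
Proof.
case/andP=> ax xb; rewrite ler_norml.
have := ler_norm a; have := ler_norm b; have := ler_normr a; have := normr_ge0 b.
have := ler_norm (- a); rewrite normrN.
lra.
Qed.

Lemma LT (g : T -> R) (a b e : R) : measurable_fun setT g -> (forall t, a <= g t <= b) ->
  a < b -> 0 < e -> (0 < n)%N -> iid_samples P Dist Z ->
  measurable [set om | empE (fun s => Z s om) g + e < popE Dist g] /\
  (P [set om | (empE (fun s => Z s om) g + e < popE Dist g)%R]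
     <= (expR (- (2 * n%:R / (b - a) ^+ 2 * e ^+ 2)))%:E)%E.
Proof.
move=> mg hg ab e0 n0 hiid.
have mZ := hiid.1.
set c := b - a.
have c0 : 0 < c by rewrite subr_gt0.
set bad := [set om | empE (fun s => Z s om) g + e < popE Dist g].
have mbad : measurable bad by apply: meas_lt; exact: meas_emp.
split => //.
have Pfin : P bad \is a fin_num.
  by rewrite ge0_fin_numE // (le_lt_trans (probability_le1 P mbad)) // ltry.
rewrite -(fineK Pfin) lee_fin.
set x := fine (P bad).
have x1 : x <= 1.
  by rewrite /x -lee_fin (fineK Pfin) (probability_le1 P mbad).
have al0 : 0 < 2 * n%:R / c ^+ 2 by rewrite divr_gt0 ?mulr_gt0 ?exprn_gt0 // ltr0n.
apply: (LIM e0 al0 c0 x1) => K K0 cKe.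
have Kp : 0 < K%:R :> R by rewrite ltr0n.
pose wK t := K%:R * (g t - a) / c.
have mK : measurable_fun setT wK.
  apply: measurable_funM; last exact: measurable_cst.
  apply: measurable_funM; first exact: measurable_cst.
  by apply: measurable_funB => //; exact: measurable_cst.
have w0 t : 0 <= wK t.
  by rewrite /wK divr_ge0 ?(ltW c0) // mulr_ge0 ?(ltW Kp) // subr_ge0; case/andP: (hg t).
have wKle t : wK t <= K%:R.
  rewrite /wK ler_pdivrMr // ler_pM2l //; rewrite /c lerD2r; by case/andP: (hg t).
pose iota t : 'I_K.+1 := inord (Num.truncn (wK t)).
have trle t : (Num.truncn (wK t) <= K)%N.
  by rewrite truncn_le_nat (le_lt_trans (wKle t)) // ltr_nat.
have iotaE t : (iota t : nat) = Num.truncn (wK t) by rewrite /iota inordK // ltnS.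
pose val (v : 'I_K.+1) := a + c * (v : nat)%:R / K%:R.
have mA v : measurable [set t | iota t = v].
  have -> : [set t | iota t = v] = setT `&` (wK @^-1` `[((v : nat)%:R : R), (v : nat).+1%:R[).
    apply/seteqP; split => t /=.
      move=> h; split => //; rewrite in_itv /=.
      have : Num.truncn (wK t) == v by rewrite -iotaE h.
      by rewrite truncn_eq.
    case=> _; rewrite in_itv /= => h; apply: val_inj => /=; rewrite iotaE; apply/eqP.
    by rewrite truncn_eq.
  exact: mK measurableT _ (measurable_itv _).
have hv v : a <= val v <= b.
  have vK : ((v : nat)%:R : R) <= K%:R by rewrite ler_nat -ltnS.
  have h0 : 0 <= c * (v : nat)%:R / K%:R by rewrite divr_ge0 ?mulr_ge0 ?(ltW c0) ?(ltW Kp).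
  have h1 : c * (v : nat)%:R / K%:R <= c.
    by rewrite ler_pdivrMr // ler_pM2l.
  rewrite /val; apply/andP; split; first by lra.
  by move: h1; rewrite /c; lra.
have lo t : val (iota t) <= g t.
  rewrite /val iotaE.
  have : ((Num.truncn (wK t))%:R : R) <= wK t by rewrite truncn_le.
  rewrite /wK => h.
  have : c * (Num.truncn (wK t))%:R / K%:R <= c * (K%:R * (g t - a) / c) / K%:R.
    by rewrite ler_pdivrMr // divfK ?lt0r_neq0 // ler_pM2l.
  have -> : c * (K%:R * (g t - a) / c) / K%:R = g t - a.
    by field; rewrite !lt0r_neq0.
  lra.
have hi t : g t <= val (iota t) + c / K%:R.
  rewrite /val iotaE.
  have : wK t < (Num.truncn (wK t)).+1%:R by exact: truncnS_gt.
  rewrite /wK -natr1 => h.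
  have : c * (K%:R * (g t - a) / c) / K%:R <= c * ((Num.truncn (wK t))%:R + 1) / K%:R.
    by rewrite ler_pdivrMr // divfK ?lt0r_neq0 // ler_pM2l // ltW.
  have -> : c * (K%:R * (g t - a) / c) / K%:R = g t - a.
    by field; rewrite !lt0r_neq0.
  have -> : c * ((Num.truncn (wK t))%:R + 1) / K%:R
    = c * (Num.truncn (wK t))%:R / K%:R + c / K%:R by field; rewrite lt0r_neq0.
  lra.
set mu := \sum_v fine (Dist [set t | iota t = v]) * val v.
have popb : popE Dist g <= mu + c / K%:R.
  have -> : mu + c / K%:R
     = Rintegral Dist setT (fun t => \sum_v (val v + c / K%:R) * \1_[set t | iota t = v] t).
    rewrite SIMPs // /mu.
    under [in RHS]eq_bigr do rewrite mulrDl.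
    rewrite big_split /= -mulr_sumr (sum_pi Dist mA) mulr1.
    by congr (_ + _); apply: eq_bigr => v _; rewrite mulrC.
  rewrite /popE; apply: le_Rintegral => //.
  - apply: (@INT _ _ _ _ _ (`|a| + `|b|)) => // t; exact: bnd_norm.
  - apply: (@INT _ _ _ _ _ (`|a| + `|b| + c / K%:R)).
      move=> t; rewrite sum_indic; apply: le_trans (ler_normD _ _) _.
      rewrite (ger0_norm (divr_ge0 (ltW c0) (ltW Kp))) lerD2r.
      exact: bnd_norm.
    apply: measurable_sum => v; apply: measurable_funM; first exact: measurable_cst.
    exact: measurable_indic.
  - by move=> t _; rewrite sum_indic; exact: hi.
have e'0 : 0 < e - c / K%:R by rewrite subr_gt0.
have [mK' PK] := DLT mA hv ab e'0 n0 hiid.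
have sub : bad `<=` [set om | n%:R^-1 * \sum_(s < n) val (iota (Z s om)) + (e - c / K%:R) < mu].
  move=> om; rewrite /bad /= /empE => h.
  have : n%:R^-1 * \sum_(s < n) val (iota (Z s om)) <= n%:R^-1 * \sum_(s < n) g (Z s om).
    rewrite ler_wpM2l ?invr_ge0 ?ler0n //.
    by apply: ler_sum => s _; exact: lo.
  move: h popb; rewrite /popE; lra.
have := le_measure P (mem_set mbad) (mem_set mK') sub.
move=> H; rewrite -lee_fin (fineK Pfin); exact: le_trans H PK.
Qed.

Lemma GH (g : T -> R) (a b e : R) : measurable_fun setT g -> (forall t, a <= g t <= b) ->
  a < b -> 0 < e -> (0 < n)%N -> iid_samples P Dist Z ->
  measurable [set om | e < `|popE Dist g - empE (fun s => Z s om) g|] /\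
  (P [set om | (e < `|popE Dist g - empE (fun s => Z s om) g|)%R]
     <= (2 * expR (- (2 * n%:R / (b - a) ^+ 2 * e ^+ 2)))%:E)%E.
Proof.
move=> mg hg ab e0 n0 hiid.
have [m1 P1] := LT mg hg ab e0 n0 hiid.
have mg' : measurable_fun setT (fun t => - g t) by apply: measurableT_comp => //.
have hg' t : - b <= - g t <= - a by rewrite !lerN2 andbC; exact: hg.
have ab' : - b < - a by rewrite ltrN2.
have [m2 P2] := LT mg' hg' ab' e0 n0 hiid.
have popN : popE Dist (fun t => - g t) = - popE Dist g.
  rewrite /popE.
  have -> : Rintegral Dist setT (fun t => - g t) = Rintegral Dist setT (fun t => (-1) * g t).
    by apply: eq_Rintegral => t _; rewrite mulN1r.
  rewrite RintegralZl ?mulN1r //.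
  apply: (@INT _ _ _ _ _ (`|a| + `|b|)) => // t; exact: bnd_norm.
have empN om : empE (fun s => Z s om) (fun t => - g t) = - empE (fun s => Z s om) g.
  by rewrite /empE sumrN mulrN.
have eqS : [set om | e < `|popE Dist g - empE (fun s => Z s om) g|]
   = [set om | empE (fun s => Z s om) g + e < popE Dist g] `|`
     [set om | empE (fun s => Z s om) (fun t => - g t) + e < popE Dist (fun t => - g t)].
  apply/seteqP; split => om /=; rewrite popN empN.
    by rewrite ltr_normr => /orP[h|h]; [left|right]; lra.
  by rewrite ltr_normr => -[h|h]; apply/orP; [left|right]; lra.
rewrite eqS; split; first exact: measurableU.
apply: le_trans (measureU2 _ m1 m2) _.
have eab : - a - - b = b - a by rewrite opprK addrC.
rewrite eab in P2.
rewrite -[2%R]/(1 + 1)%R mulrDl mul1r EFinD.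
apply: leeD => //.
Qed.
End Prob3.

Section LAGs.
Variables (R : realType) (T X : Type) (N d m : nat) (I : finType)
  (hyp : I -> X -> 'I_d -> R) (xof : T -> X) (yof : T -> 'I_d -> R)
  (br : 'I_N -> ('I_d -> R) -> 'I_m) (u : {ffun 'I_N -> 'I_m} -> ('I_d -> R) -> R)
  (gamma C : R).

Lemma LAG (E1 E2 : (T -> R) -> R) (w : I -> R) (lam : bool * 'I_N * 'I_d * 'I_m -> R) (e1 e2 : R) :
  in_simplex w -> in_LambdaC C lam -> 0 <= e2 ->
  (forall k, `|E1 (fun t => sender_val br u (hyp k (xof t)) (yof t))
             - E2 (fun t => sender_val br u (hyp k (xof t)) (yof t))| <= e1) ->
  (forall k i j a,
     `|E1 (fun t => (hyp k (xof t) j - yof t j) * bi br i (hyp k (xof t)) a)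
      - E2 (fun t => (hyp k (xof t) j - yof t j) * bi br i (hyp k (xof t)) a)| <= e2) ->
  `| lagrangian hyp xof yof br u gamma E1 w lam
     - lagrangian hyp xof yof br u gamma E2 w lam | <= e1 + C * e2.
Proof.
move=> [w0 w1] [l0 l1] e20 h1 h2.
rewrite /lagrangian.
set A1 := \sum_k w k * _.
set A2 := \sum_k w k * _.
set B1 := \sum_q _.
set B2 := \sum_q _.
have -> : - A1 + B1 - (- A2 + B2) = (A2 - A1) + (B1 - B2) by ring.
apply: le_trans (ler_normD _ _) _.
apply: lerD.
  rewrite /A1 /A2 -sumrB.
  apply: le_trans (ler_norm_sum _ _ _) _.
  rewrite -[X in _ <= X]mul1r -w1 mulr_suml.
  apply: ler_sum => k _.
  rewrite -mulrBr normrM ger0_norm // ler_wpM2l //.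
  by rewrite distrC.
rewrite /B1 /B2 -sumrB.
apply: le_trans (ler_norm_sum _ _ _) _.
apply: (@le_trans _ _ (\sum_q lam q * e2)); last first.
  by rewrite -mulr_suml ler_wpM2r.
apply: ler_sum => -[[[s i] j] a] _ /=.
rewrite -mulrBr -mulrBr opprB addrA subrK -sumrB.
rewrite normrM ger0_norm // ler_wpM2l // normrM.
have -> : `|sgn R s| = 1 by case: s; rewrite /sgn ?normrN normr1.
rewrite mul1r.
apply: le_trans (ler_norm_sum _ _ _) _.
rewrite -[X in _ <= X]mul1r -w1 mulr_suml.
apply: ler_sum => k _.
by rewrite -mulrBr normrM ger0_norm // ler_wpM2l.
Qed.
End LAGs.


Lemma sv_range (R : realType) (N d m : nat) (br : 'I_N -> ('I_d -> R) -> 'I_m)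
  (u : {ffun 'I_N -> 'I_m} -> ('I_d -> R) -> R) z y :
  (forall a y, 0 <= u a y <= 1) -> 0 <= sender_val br u z y <= 1.
Proof.
move=> hu; rewrite /sender_val (bigD1 [ffun i => br i z]) //= big1 ?addr0.
  rewrite /bjoint big1 ?mulr1 // => i _.
  by rewrite /bi ffunE eqxx.
move=> a ha; case: (pickP (fun i => a i != br i z)) => [i hi | h].
  by rewrite /bjoint (bigD1 i) //= /bi eq_sym (negbTE hi) mul0r mulr0.
exfalso; move/eqP: ha; apply; apply/ffunP => i; rewrite ffunE.
by move: (h i) => /= /negbFE/eqP.
Qed.

Lemma bi01 (R : realType) (N d m : nat) (br : 'I_N -> ('I_d -> R) -> 'I_m) i z a :
  bi br i z a = 0 \/ bi br i z a = 1.
Proof. by rewrite /bi; case: (_ == _); [right|left]. Qed.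

Lemma H_range (R : realType) (d : nat) (x y : R) (b : R) :
  `|x| <= 1 -> `|y| <= 1 -> (b = 0 \/ b = 1) -> -2 <= (x - y) * b <= 2.
Proof.
move=> hx hy [->|->]; first by rewrite mulr0; apply/andP; split; lra.
rewrite mulr1.
move: hx hy; rewrite !ler_norml => /andP[? ?] /andP[? ?].
apply/andP; split; lra.
Qed.

Theorem lemma3_aux (R : realType)
  (N d m : nat)
  (dT : measure_display) (T : measurableType dT) (X : Type)
  (xof : T -> X) (yof : T -> 'I_d -> R) (Dist : probability T R)
  (I : finType) (hyp : I -> X -> 'I_d -> R)
  (v : 'I_N -> 'I_m -> ('I_d -> R) -> R) (br : 'I_N -> ('I_d -> R) -> 'I_m)
  (u : {ffun 'I_N -> 'I_m} -> ('I_d -> R) -> R) (gamma C delta : R) (n : nat)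
  (dO : measure_display) (Omega : measurableType dO) (P : probability Omega R)
  (Z : 'I_n -> Omega -> T) :
  (forall t j, `|yof t j| <= 1) ->
  injective hyp ->
  (forall k x j, `|hyp k x j| <= 1) ->
  (forall i a z, 0 <= v i a z <= 1) ->
  (forall i z a, v i a z <= v i (br i z) z) ->
  (forall a y, 0 <= u a y <= 1) ->
  0 <= gamma ->
  (forall j, measurable_fun setT (fun t => yof t j)) ->
  (forall k j, measurable_fun setT (fun t => hyp k (xof t) j)) ->
  (forall k i a, measurable_fun setT (fun t => bi br i (hyp k (xof t)) a)) ->
  (forall a, measurable_fun setT (fun t => u a (yof t))) ->
  (0 < n)%N -> 0 < delta ->
  iid_samples P Dist Z ->
  exists E : set Omega, measurable E /\ (P E >= (1 - delta)%:E)%E /\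
    forall om, E om ->
      forall (w : I -> R) (lam : bool * 'I_N * 'I_d * 'I_m -> R),
        in_simplex w -> in_LambdaC C lam ->
        `| lagrangian hyp xof yof br u gamma (popE Dist) w lam
           - lagrangian hyp xof yof br u gamma (empE (fun s => Z s om)) w lam |
        <= Num.sqrt (ln (4 * #|I|%:R / delta) / (2 * n%:R))
           + C * Num.sqrt (8 * ln (4 * #|I|%:R * N%:R * d%:R * m%:R / delta) / n%:R).
Proof.
move=> hy _ hh _ _ hu _ my mh mb mu n0 d0 hiid.
have [d1|d1] := leP 1 delta.
  exists set0; split => //; split; first by rewrite measure0 lee_fin subr_le0.
  by move=> om [].
have [I0|I0] := posnP #|I|.
  exists setT; split => //; split.
    have -> : P setT = 1%E by exact: probability_setT.
    by rewrite lee_fin; lra.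
  move=> om _ w lam [_ w1] _; exfalso.
  have nk : forall k : I, False by move=> k; have := card0_eq I0 k; rewrite !inE.
  move: w1; rewrite big1 => [/eqP|k]; first by rewrite eq_sym oner_eq0.
  by case: (nk k).
have nR : 0 < n%:R :> R by rewrite ltr0n.
have IR : 0 < #|I|%:R :> R by rewrite ltr0n.
set L1 := 4 * #|I|%:R / delta.
have L1gt1 : 1 < L1.
  rewrite /L1 ltr_pdivlMr // mul1r.
  have : 1 <= #|I|%:R :> R by rewrite ler1n.
  lra.
set e1 := Num.sqrt (ln L1 / (2 * n%:R)).
have lnL1 : 0 < ln L1 by rewrite ln_gt0.
have e1pos : 0 < e1 by rewrite sqrtr_gt0 divr_gt0 // mulr_gt0.
set L2 := 4 * #|I|%:R * N%:R * d%:R * m%:R / delta.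
set e2 := Num.sqrt (8 * ln L2 / n%:R).
pose F k := fun t => sender_val br u (hyp k (xof t)) (yof t).
pose H k i j a := fun t => (hyp k (xof t) j - yof t j) * bi br i (hyp k (xof t)) a.
have mF k : measurable_fun setT (F k).
  apply: measurable_sum => a; apply: measurable_funM => //.
  by apply: measurable_prod => i _; exact: mb.
have rF k t : 0 <= F k t <= 1 by exact: sv_range.
have mH k i j a : measurable_fun setT (H k i j a).
  by apply: measurable_funM => //; apply: measurable_funB.
have rH k i j a t : -2 <= H k i j a t <= 2.
  by apply: H_range => //; exact: bi01.
pose B1 k := [set om | e1 < `|popE Dist (F k) - empE (fun s => Z s om) (F k)|].
pose Q := ('I_N * 'I_d * 'I_m)%type.
pose B2 (kq : I * Q) := [set om | e2 < `|popE Dist (H kq.1 kq.2.1.1 kq.2.1.2 kq.2.2)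
                                   - empE (fun s => Z s om) (H kq.1 kq.2.1.1 kq.2.1.2 kq.2.2)|].
have G1 k := GH (mF k) (rF k) ltr01 e1pos n0 hiid.
have mB1 k : measurable (B1 k) by exact: (G1 k).1.
have PB1 k : (P (B1 k) <= (delta / (2 * #|I|%:R))%:E)%E.
  have [_ h] := G1 k; apply: le_trans h _; rewrite lee_fin.
  have -> : 2 * n%:R / (1 - 0) ^+ 2 * e1 ^+ 2 = ln L1.
    rewrite sqr_sqrtr ?divr_ge0 ?(ltW lnL1) ?mulr_ge0 ?(ltW nR) // subr0 expr1n divr1.
    by field; rewrite lt0r_neq0.
  rewrite expRN lnK ?posrE ?(lt_trans ltr01) // /L1.
  rewrite le_eqVlt; apply/orP; left; apply/eqP.
  by field; rewrite !lt0r_neq0.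
pose KK : R := #|I|%:R * N%:R * d%:R * m%:R.
have L2E : L2 = 4 * KK / delta by rewrite /L2 /KK !mulrA.
have KKge1 (i : 'I_N) (j : 'I_d) (a : 'I_m) : 1 <= KK.
  have hN : 1 <= N%:R :> R by rewrite ler1n (leq_ltn_trans (leq0n i) (ltn_ord i)).
  have hd : 1 <= d%:R :> R by rewrite ler1n (leq_ltn_trans (leq0n j) (ltn_ord j)).
  have hm : 1 <= m%:R :> R by rewrite ler1n (leq_ltn_trans (leq0n a) (ltn_ord a)).
  have hI : 1 <= #|I|%:R :> R by rewrite ler1n.
  exact: mulr_ege1 (mulr_ege1 (mulr_ege1 hI hN) hd) hm.
have L2gt1 (i : 'I_N) (j : 'I_d) (a : 'I_m) : 1 < L2.
  rewrite L2E ltr_pdivlMr // mul1r.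
  have h4 : (4 : R) <= 4 * KK by rewrite -[X in X <= _]mulr1 ler_pM2l // (KKge1 i j a).
  by apply: lt_le_trans d1 _; apply: le_trans h4; rewrite ler1n.
have e2pos (i : 'I_N) (j : 'I_d) (a : 'I_m) : 0 < e2.
  by rewrite sqrtr_gt0 divr_gt0 // mulr_gt0 // ln_gt0 // (L2gt1 i j a).
have m22 : (-2 : R) < 2 by apply: (@lt_trans _ _ 0); rewrite ?oppr_lt0 ?ltr0n.
have mB2 kq : measurable (B2 kq).
  by case: kq => k [[i j] a]; exact: (GH (mH k i j a) (rH k i j a) m22 (e2pos i j a) n0 hiid).1.
have PB2 kq : (P (B2 kq) <= (delta / (2 * KK))%:E)%E.
  case: kq => k [[i j] a].
  have [_ h] := GH (mH k i j a) (rH k i j a) m22 (e2pos i j a) n0 hiid.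
  apply: le_trans h _; rewrite lee_fin.
  have lnL2 : 0 < ln L2 by rewrite ln_gt0 // (L2gt1 i j a).
  have -> : 2 * n%:R / (2 - -2) ^+ 2 * e2 ^+ 2 = ln L2.
    rewrite /e2 sqr_sqrtr ?divr_ge0 ?mulr_ge0 ?(ltW lnL2) ?(ltW nR) //.
    by field; rewrite lt0r_neq0.
  have L2pos : 0 < L2 by rewrite (lt_trans ltr01) // (L2gt1 i j a).
  rewrite expRN lnK ?posrE //.
  have KK0 : KK != 0 by apply: lt0r_neq0; apply: lt_le_trans (KKge1 i j a).
  rewrite L2E le_eqVlt; apply/orP; left; apply/eqP.
  by field; rewrite KK0 lt0r_neq0.
pose U1 := \big[setU/set0]_(k <- index_enum I) B1 k.
pose U2 := \big[setU/set0]_(kq <- index_enum (I * Q)%type) B2 kq.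
have mU1 : measurable U1 by apply: bigsetU_measurable => k _.
have mU2 : measurable U2 by apply: bigsetU_measurable => k _.
have PU1 : (P U1 <= (delta / 2)%:E)%E.
  apply: le_trans (sub_bigU P _ _ mB1) _.
  apply: (@le_trans _ _ (\sum_(k <- index_enum I) (delta / (2 * #|I|%:R))%:E)%E).
    by apply: lee_sum => k _; exact: PB1.
  rewrite sumEFin lee_fin sumr_const.
  rewrite -[#|xpredT|]/#|I| -mulr_natr le_eqVlt; apply/orP; left; apply/eqP.
  by field; rewrite lt0r_neq0.
have PU2 : (P U2 <= (delta / 2)%:E)%E.
  apply: le_trans (sub_bigU P _ _ mB2) _.
  apply: (@le_trans _ _ (\sum_(k <- index_enum (I * Q)%type) (delta / (2 * KK))%:E)%E).
    by apply: lee_sum => k _; exact: PB2.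
  rewrite sumEFin lee_fin sumr_const.
  rewrite -[#|xpredT|]/#|{: I * Q}| card_prod !card_prod !card_ord.
  have hK : ((#|I| * (N * d * m))%:R : R) = KK by rewrite /KK !natrM !mulrA.
  rewrite -(mulr_natr (delta / (2 * KK))) hK.
  have [->|K0] := eqVneq KK 0.
    by rewrite mulr0 divr_ge0 // ltW.
  rewrite le_eqVlt; apply/orP; left; apply/eqP.
  by field.
exists (~` (U1 `|` U2)); split; first exact/measurableC/measurableU.
split.
  have mU : measurable (U1 `|` U2) by apply: measurableU.
  have hC : P (~` (U1 `|` U2)) = (1 - P (U1 `|` U2))%E by exact: probability_setC.
  rewrite hC.
  have PU : (P (U1 `|` U2) <= delta%:E)%E.
    apply: le_trans (measureU2 _ _ _) _ => //.
    apply: le_trans (leeD PU1 PU2) _.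
    by rewrite -EFinD lee_fin le_eqVlt; apply/orP; left; apply/eqP; field.
  have fin : P (U1 `|` U2) \is a fin_num.
    by rewrite ge0_fin_numE // (le_lt_trans PU) // ltry.
  move: PU; rewrite -(fineK fin) -EFinB !lee_fin => PU.
  by rewrite lerD2l lerN2.
move=> om hE w lam hw hl.
apply: LAG => //.
- by rewrite sqrtr_ge0.
- move=> k; rewrite leNgt; apply/negP => h; apply: hE; left.
  rewrite /U1 -bigcup_seq; exists k => //=; exact: mem_index_enum.
- move=> k i j a; rewrite leNgt; apply/negP => h; apply: hE; right.
  rewrite /U2 -bigcup_seq; exists (k, (i, j, a)) => //=; exact: mem_index_enum.
Qed.

End Helpers.
Import Helpers.
Unset Implicit Arguments. Set Strict Implicit. Set Printing Implicit Defensive.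

Theorem lemma3 (R : realType)
  (N d m : nat)
  (dT : measure_display) (T : measurableType dT) (X : Type)
  (xof : T -> X) (yof : T -> 'I_d -> R) (Dist : probability T R)
  (I : finType) (hyp : I -> X -> 'I_d -> R)
  (v : 'I_N -> 'I_m -> ('I_d -> R) -> R) (br : 'I_N -> ('I_d -> R) -> 'I_m)
  (u : {ffun 'I_N -> 'I_m} -> ('I_d -> R) -> R) (gamma C delta : R) (n : nat)
  (dO : measure_display) (Omega : measurableType dO) (P : probability Omega R)
  (Z : 'I_n -> Omega -> T) :
  (* data: y in [-1,1]^d ; hypotheses h : X -> [-1,1]^d, H finite (injectively indexed by I) *)
  (forall t j, `|yof t j| <= 1) ->
  injective hyp ->
  (forall k x j, `|hyp k x j| <= 1) ->
  (* receiver utilities in [0,1], br = best response with a fixed tie-breaking *)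
  (forall i a z, 0 <= v i a z <= 1) ->
  (forall i z a, v i a z <= v i (br i z) z) ->
  (* sender utility in [0,1] *)
  (forall a y, 0 <= u a y <= 1) ->
  0 <= gamma ->
  (* measurability of the quantities being averaged *)
  (forall j, measurable_fun setT (fun t => yof t j)) ->
  (forall k j, measurable_fun setT (fun t => hyp k (xof t) j)) ->
  (forall k i a, measurable_fun setT (fun t => bi br i (hyp k (xof t)) a)) ->
  (forall a, measurable_fun setT (fun t => u a (yof t))) ->
  (0 < n)%N -> 0 < delta ->
  iid_samples P Dist Z ->
  exists E : set Omega, measurable E /\ (P E >= (1 - delta)%:E)%E /\
    forall om, E om ->
      forall (w : I -> R) (lam : bool * 'I_N * 'I_d * 'I_m -> R),
        in_simplex w -> in_LambdaC C lam ->
        `| lagrangian hyp xof yof br u gamma (popE Dist) w lam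
           - lagrangian hyp xof yof br u gamma (empE (fun s => Z s om)) w lam |
        <= Num.sqrt (ln (4 * #|I|%:R / delta) / (2 * n%:R))
           + C * Num.sqrt (8 * ln (4 * #|I|%:R * N%:R * d%:R * m%:R / delta) / n%:R).
Proof.
exact: Helpers.lemma3_aux.
Qed.
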